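(* Let $r$ be a Hermitian symmetric polynomial in $n$ variables, let $t\mapsto z(t)$ be a holomorphic polynomial mapping $\mathbb{C}\to\mathbb{C}^n$, and let $z^*r$ denote the Hermitian symmetric polynomial in one variable $t\mapsto r(z(t),\overline{z(t)})$. Then: (i) if $r\in\mathcal{Q}(n)$ then $z^*r\in\mathcal{Q}(1)$; (ii) if $r\in\mathcal{Q}'(n)$ then $z^*r\in\mathcal{Q}'(1)$; (iii) for every integer $k\ge1$ and for $k=\infty$, if $r\in\mathcal{P}_k(n)$ then $z^*r\in\mathcal{P}_k(1)$.
   Context: A Hermitian symmetric polynomial in $n$ variables is $r(z,\overline w)=\sum c_{\alpha\beta}z^\alpha\overline w^\beta$ with $c_{\alpha\beta}=\overline{c_{\beta\alpha}}$. For a positive integer $k$, $r\in\mathcal{P}_k(n)$ if for every choice of $k$ points $z_1,\dots,z_k\in\mathbb{C}^n$ the $k\times k$ matrix $(r(z_i,\overline{z_j}))$ is non-negative definite. $r\in\mathcal{P}_\infty(n)$ if $r(z,\overline z)=\|h(z)\|^2$ for some holomorphic polynomial mapping $h$ (with values in some $\mathbb{C}^N$). $\mathcal{Q}(n)$: $r=\|F\|^2/\|G\|^2$ for holomorphic polynomial mappings $F,G$, $G\not\equiv0$. $\mathcal{Q}'(n)$: $r\in\mathcal{P}_1(n)$ and there exist $s\in\mathcal{P}_1(n)$, not identically $0$, and a holomorphic polynomial mapping $F$ with $rs=\|F\|^2$. *)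

(* Defs.v *)
From HB Require Import structures.
From mathcomp Require Import all_boot all_order all_algebra.
From mathcomp Require Import reals.
From mathcomp Require Import complex.
From mathcomp Require Import mpoly.

Set Implicit Arguments.
Unset Strict Implicit.
Unset Printing Implicit Defensive.

Import Order.TTheory GRing.Theory Num.Theory.
Local Open Scope ring_scope.

Section HermDefs.
Variable R : realType.
Local Notation C := (R[i]).

(* A polynomial r(z, wbar) = sum c_{ab} z^a wbar^b in n variables is encoded
   as an element of {mpoly C[n + n]}: the first n variables stand for z,
   the last n for wbar. *)

Definition swap_idx (n : nat) (i : 'I_(n + n)) : 'I_(n + n) :=
  match split i with
  | inl j => rshift n j
  | inr j => lshift n j
  end.

Definition swapm (n : nat) (m : 'X_{1..n + n}) : 'X_{1..n + n} :=
  [multinom m (swap_idx i) | i < n + n].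

Definition hsym_poly (n : nat) (r : {mpoly C[n + n]}) : Prop :=
  forall m : 'X_{1..n + n}, r@_m = (r@_(swapm m))^*.

Definition hevalp (n : nat) (r : {mpoly C[n + n]}) (z w : 'I_n -> C) : C :=
  r.@[fun i => match split i with inl j => z j | inr j => (w j)^* end].

Definition hsqnorm (n N : nat) (h : 'I_N -> {mpoly C[n]}) (z : 'I_n -> C) : C :=
  \sum_(j < N) (h j).@[z] * ((h j).@[z])^*.

Definition nonneg_definite (k : nat) (M : 'M[C]_k) : Prop :=
  forall v : 'I_k -> C, 0 <= \sum_(i < k) \sum_(j < k) (v i)^* * M i j * v j.

Definition in_Pk (n k : nat) (r : {mpoly C[n + n]}) : Prop :=
  hsym_poly r /\
  forall pts : 'I_k -> 'I_n -> C,
    nonneg_definite (\matrix_(i < k, j < k) hevalp r (pts i) (pts j)).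

Definition in_Pinf (n : nat) (r : {mpoly C[n + n]}) : Prop :=
  hsym_poly r /\
  exists (N : nat) (h : 'I_N -> {mpoly C[n]}),
    forall z : 'I_n -> C, hevalp r z z = hsqnorm h z.

Definition in_Q (n : nat) (r : {mpoly C[n + n]}) : Prop :=
  hsym_poly r /\
  exists (N M : nat) (F : 'I_N -> {mpoly C[n]}) (G : 'I_M -> {mpoly C[n]}),
    (exists j, G j != 0) /\
    forall z : 'I_n -> C, hsqnorm G z != 0 ->
      hevalp r z z = hsqnorm F z / hsqnorm G z.

Definition in_Q' (n : nat) (r : {mpoly C[n + n]}) : Prop :=
  in_Pk 1 r /\
  exists (s : {mpoly C[n + n]}) (N : nat) (F : 'I_N -> {mpoly C[n]}),
    in_Pk 1 s /\ s != 0 /\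
    forall z : 'I_n -> C, hevalp r z z * hevalp s z z = hsqnorm F z.

(* hpullback z^* r along a holomorphic polynomial map t |-> z(t), C -> C^n:
   substitute z_j(t) for the j-th z-variable and conj(z_j)(sbar) (the
   polynomial with conjugated coefficients, in the variable sbar) for the
   j-th wbar-variable. *)
Definition hpullback (n : nat) (r : {mpoly C[n + n]}) (z : 'I_n -> {poly C})
  : {mpoly C[1 + 1]} :=
  comp_mpoly
    [tuple match split i with
           | inl j => (map_poly (fun c : C => c%:MP) (z j)).['X_(lshift 1 ord0)]
           | inr j => (map_poly (fun c : C => (c^*)%:MP) (z j)).['X_(rshift 1 ord0)]
           end | i < n + n] r.

End HermDefs.

(* Main.v *)
Require Import Defs.
From HB Require Import structures.
From mathcomp Require Import all_boot all_order all_algebra all_fingroup.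
From mathcomp Require Import reals complex mpoly.
From mathcomp Require Import ring zify lra.
From Stdlib Require Import Classical.
Set Implicit Arguments.
Unset Strict Implicit.
Unset Printing Implicit Defensive.
Import Order.TTheory GRing.Theory Num.Theory.
Local Open Scope ring_scope.

Section Aux.
Variable R : realType.
Local Notation C := (R[i]).
Local Notation widen := (widen_ord (leqnSn _)).

Lemma muni_eval n (p : {mpoly C[n.+1]}) (v : 'I_n.+1 -> C) :
  p.@[v] = (map_poly (meval (fun i => v (widen i))) (muni p)).[v ord_max].
Proof.
rewrite muniE mevalE raddf_sum horner_sum; apply: eq_bigr => m _.
rewrite -!mul_polyC.
set w := (fun i : 'I_n => v (widen i)).
rewrite [X in X.[_]]/=.
rewrite (@rmorphM _ _ (map_poly (meval w))) /=.
rewrite (map_polyC (meval w)) (map_polyXn (meval w)) hornerM hornerXn hornerC.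
rewrite /= (mevalZ w) (mevalX w) big_ord_recr /= mulrA; congr (_ * _ * _).
by apply: eq_bigr => i _; rewrite mnmE.
Qed.

Lemma muni_coef n (p : {mpoly C[n.+1]}) (m : 'X_{1..n.+1}) :
  ((muni p)`_(m ord_max))@_[multinom m (widen i) | i < n] = p@_m.
Proof.
have E (m2 : 'X_{1..n.+1}) : ([multinom m2 (widen i) | i < n] == [multinom m (widen i) | i < n])
   && (m ord_max == m2 ord_max) = (m2 == m).
  apply/idP/eqP => [/andP[/eqP E1 /eqP E2]|->]; last by rewrite !eqxx.
  apply/mnmP => i; have [j ->|] := unliftP ord_max i.
    have -> : lift ord_max j = widen j by apply: val_inj; rewrite /= /bump leqNgt ltn_ord.
    by have := congr1 (fun mm : 'X_{1..n} => mm j) E1; rewrite !mnmE.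
  by move=> ->.
rewrite muniE coef_sum raddf_sum /=.
under eq_bigr => m2 _ do rewrite coefZ coefXn mulr_natr mcoeffMn mcoeffZ mcoeffX.
have M (a b : bool) (x : C) : x * a%:R *+ b = x * (a && b)%:R.
  by case: a; case: b; rewrite ?mulr1 ?mulr0 ?mulr0n ?mulr1n.
under eq_bigr => m2 _ do rewrite M E.
case: (boolP (m \in msupp p)) => Hm.
  rewrite (bigD1_seq m) //= ?msupp_uniq // eqxx !mulr1 big1_seq ?addr0 //.
  by move=> m2 /andP[ne _]; rewrite (negbTE ne) mulr0.
rewrite big1_seq; first by apply/esym/eqP; rewrite mcoeff_eq0.
move=> m2 /andP[_ H2]; have : m2 != m by apply: contraNneq Hm => <-.
by move/negbTE => ->; rewrite mulr0.
Qed.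

Lemma poly_nat0 (P : {poly C}) : (forall k : nat, P.[k%:R] = 0) -> P = 0.
Proof.
move=> H; apply: (@roots_geq_poly_eq0 _ P [seq k%:R | k <- iota 0 (size P)]).
- by apply/allP => x /mapP[k _ ->]; apply/rootP.
- rewrite map_inj_uniq ?iota_uniq //.
  by move=> a b /eqP; rewrite eqr_nat => /eqP.
- by rewrite size_map size_iota.
Qed.

Lemma widen_lift n (j : 'I_n) : widen j = lift ord_max j.
Proof. by apply: val_inj; rewrite /= /bump leqNgt ltn_ord. Qed.

Lemma ident_nat n (p : {mpoly C[n]}) :
  (forall v : 'I_n -> nat, p.@[fun i => (v i)%:R] = 0) -> p = 0.
Proof.
elim: n p => [|n IH] p H.
  have := H (fun _ => 0%N); rewrite {1}(nvar0_mpolyC p) mevalC => E.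
  by rewrite (nvar0_mpolyC p) E.
apply/mpolyP => m; rewrite mcoeff0 -muni_coef.
suff -> : (muni p)`_(m ord_max) = 0 by rewrite mcoeff0.
apply: IH => v.
set w := (fun i : 'I_n => (v i)%:R : C).
rewrite -coef_map.
suff -> : map_poly (meval w) (muni p) = 0 by rewrite coef0.
apply: poly_nat0 => j.
pose vn (i : 'I_n.+1) : nat := if unlift ord_max i is Some j' then v j' else j.
have := H vn; rewrite muni_eval => <-.
congr (_.[_]); last by rewrite /vn unlift_none.
apply: eq_map_poly => q; apply: meval_eq => i.
by rewrite /vn widen_lift liftK.
Qed.

Lemma ident_all n (p : {mpoly C[n]}) : (forall v, p.@[v] = 0) -> p = 0.
Proof. by move=> H; apply: ident_nat => v; apply: H. Qed.

Lemma split_l m k (j : 'I_m) : split (lshift k j) = inl j.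
Proof. exact: (unsplitK (inl _ j)). Qed.
Lemma split_r m k (j : 'I_k) : split (rshift m j) = inr j.
Proof. exact: (unsplitK (inr _ j)). Qed.

Lemma swap_idxK n : involutive (@swap_idx n).
Proof.
move=> i; rewrite /swap_idx; case: (split_ordP i) => j -> /=.
  by rewrite ?split_l ?split_r.
by rewrite ?split_l ?split_r.
Qed.

Lemma swap_inj n : injective (@swap_idx n).
Proof. exact: (inv_inj (@swap_idxK n)). Qed.

Definition sperm n : 'S_(n + n) := perm (@swap_inj n).

Lemma rmorph_meval n (S T : comNzRingType) (h : {rmorphism S -> T})
  (q : {mpoly S[n]}) v : h (q.@[v]) = (map_mpoly h q).@[h \o v].
Proof.
rewrite [in LHS](mpolyE q) [in RHS](mpolyE q).
rewrite (raddf_sum (meval v)) (raddf_sum h) (raddf_sum (map_mpoly h)) (raddf_sum (meval (h \o v))).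
apply: eq_bigr => m _.
rewrite /= (mevalZ v) (mevalX v) rmorphM rmorph_prod /= map_mpolyZ map_mpolyX (mevalZ (h \o v)) (mevalX (h \o v)).
congr (_ * _); apply: eq_bigr => i _; by rewrite rmorphXn.
Qed.

Lemma msym_eval n (s : 'S_n) (p : {mpoly C[n]}) v :
  (msym s p).@[v] = p.@[fun i => v (s i)].
Proof.
have -> : msym s p = p \mPo [tuple 'X_(s i) | i < n].
  rewrite /msym /comp_mpoly /mmap; apply: eq_bigr => m _; congr (_ * _).
  by rewrite /mmap1; apply: eq_bigr => i _; rewrite tnth_mktuple.
by rewrite comp_mpoly_meval; apply: meval_eq => i; rewrite tnth_mktuple mevalXU.
Qed.

Definition hconj n (p : {mpoly C[n + n]}) : {mpoly C[n + n]} :=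
  map_mpoly (@Num.conj C) (msym (sperm n) p).

Lemma hconj_coef n (p : {mpoly C[n + n]}) m : (hconj p)@_m = (p@_(swapm m))^*.
Proof.
rewrite /hconj mcoeff_map_mpoly mcoeff_sym; congr (_^* ); congr (p@_ _).
by apply/mnmP => i; rewrite !mnmE permE.
Qed.

Lemma hsymP n (p : {mpoly C[n + n]}) : hsym_poly p <-> hconj p = p.
Proof.
split => [H|H m]; first by apply/mpolyP => m; rewrite hconj_coef -H.
by rewrite -{1}H hconj_coef.
Qed.

Lemma conj_meval n (p : {mpoly C[n]}) v :
  (map_mpoly (@Num.conj C) p).@[v] = (p.@[fun i => (v i)^*])^*.
Proof.
rewrite (rmorph_meval (@Num.conj C)); apply: meval_eq => i /=.
by rewrite conjCK.
Qed.

Lemma hconj_eval n (p : {mpoly C[n + n]}) v :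
  (hconj p).@[v] = (p.@[fun i => (v (swap_idx i))^*])^*.
Proof.
rewrite /hconj conj_meval msym_eval; congr (_^* ); apply: meval_eq => i.
by rewrite permE.
Qed.

Definition hv n (x y : 'I_n -> C) : 'I_(n + n) -> C :=
  fun i => match split i with inl j => x j | inr j => (y j)^* end.

Lemma hevalpE n (p : {mpoly C[n + n]}) x y : hevalp p x y = p.@[hv x y].
Proof. by []. Qed.

Lemma hsym_eval n (p : {mpoly C[n + n]}) x y :
  hsym_poly p -> hevalp p x y = (hevalp p y x)^*.
Proof.
move/hsymP => H; rewrite !hevalpE -{1}H hconj_eval; congr (_^* ).
apply: meval_eq => i; rewrite /hv /swap_idx.
by case: (split_ordP i) => j Ej /=; rewrite ?Ej ?split_r ?split_l ?conjCK.
Qed.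

Lemma hsym_of_eval n (p : {mpoly C[n + n]}) :
  (forall x y, hevalp p x y = (hevalp p y x)^*) -> hsym_poly p.
Proof.
move=> H; apply/hsymP; apply/eqP; rewrite -subr_eq0; apply/eqP.
apply: ident_all => v; rewrite (mevalB v) hconj_eval; apply/eqP; rewrite subr_eq0; apply/eqP.
pose x := fun j => v (lshift n j); pose y := fun j => (v (rshift n j))^*.
have -> : p.@[v] = hevalp p x y.
  rewrite hevalpE; apply: meval_eq => i; rewrite /hv /x /y.
  by case: (split_ordP i) => j Ej /=; rewrite ?Ej ?split_r ?split_l ?conjCK.
rewrite H; congr (_^* ); rewrite hevalpE; apply: meval_eq => i; rewrite /hv /x /y /swap_idx.
by case: (split_ordP i) => j Ej /=; rewrite ?Ej ?split_r ?split_l ?conjCK.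
Qed.

Lemma herm_ident n (p : {mpoly C[n + n]}) :
  (forall x, hevalp p x x = 0) -> p = 0.
Proof.
move=> H.
pose T := [tuple match split i with
           | inl j => 'X_(lshift n j) + 'i *: 'X_(rshift n j)
           | inr j => 'X_(lshift n j) - 'i *: 'X_(rshift n j) end
           : {mpoly C[n + n]} | i < n + n].
have evT u i : (tnth T i).@[u] = match split i with
    | inl j => u (lshift n j) + 'i * u (rshift n j)
    | inr j => u (lshift n j) - 'i * u (rshift n j) end.
  rewrite tnth_mktuple; case: (split i) => j.
    by rewrite (mevalD u) (mevalZ u) !(mevalXU u).
  by rewrite (mevalB u) (mevalZ u) !(mevalXU u).
have q0 : p \mPo T = 0.
  apply: ident_nat => a; rewrite comp_mpoly_meval.
  pose x := fun j => (a (lshift n j))%:R + 'i * (a (rshift n j))%:R : C.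
  rewrite -(H x) hevalpE; apply: meval_eq => i; rewrite evT /hv.
  case: (split i) => j //.
  by rewrite /x rmorphD rmorphM /= conjCi !conjC_nat mulNr.
have i0 : ('i : C) != 0 by rewrite -normr_eq0 normCi oner_eq0.
have t0 : (2 : C) != 0 by rewrite pnatr_eq0.
apply: ident_all => u.
pose w := fun i => match split i with
    | inl j => (u (lshift n j) + u (rshift n j)) / 2
    | inr j => (u (lshift n j) - u (rshift n j)) / (2 * 'i) end : C.
have : (p \mPo T).@[w] = 0 by rewrite q0 meval0.
rewrite comp_mpoly_meval => <-; apply: meval_eq => i; rewrite evT.
case: (split_ordP i) => j Ej /=; rewrite /w ?Ej !split_l !split_r; field.
all: by rewrite ?i0 ?t0.
Qed.

Lemma zpoly_eval k (p : {poly C}) (i : 'I_k) u :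
  ((map_poly (fun c : C => c%:MP) p).['X_i]).@[u] = p.[u i].
Proof.
rewrite -(horner_map (meval u)) /= (mevalXU u) -map_poly_comp.
by rewrite (@eq_map_poly _ _ _ idfun) ?map_poly_id // => c; rewrite /= mevalC.
Qed.

Lemma zpolyc_eval k (p : {poly C}) (i : 'I_k) u :
  ((map_poly (fun c : C => (c^* )%:MP) p).['X_i]).@[u] = ((p.[(u i)^*])^* ).
Proof.
rewrite -(horner_map (meval u)) /= (mevalXU u) -map_poly_comp.
rewrite (@eq_map_poly _ _ _ (@Num.conj C)); last by move=> c; rewrite /= mevalC.
by rewrite -{1}(conjCK (u i)) horner_map.
Qed.

Lemma pull_eval n (r : {mpoly C[n + n]}) (z : 'I_n -> {poly C}) x y :
  hevalp (hpullback r z) x y =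
  hevalp r (fun j => (z j).[x ord0]) (fun j => (z j).[y ord0]).
Proof.
rewrite /hpullback hevalpE comp_mpoly_meval hevalpE; apply: meval_eq => i.
rewrite tnth_mktuple /hv; case: (split i) => j.
  by rewrite zpoly_eval split_l.
by rewrite zpolyc_eval split_r conjCK.
Qed.

Lemma pull_hsym n (r : {mpoly C[n + n]}) (z : 'I_n -> {poly C}) :
  hsym_poly r -> hsym_poly (hpullback r z).
Proof.
move=> H; apply: hsym_of_eval => x y; rewrite !pull_eval; exact: hsym_eval.
Qed.

Definition hcomp n (h : {mpoly C[n]}) (z : 'I_n -> {poly C}) : {mpoly C[1]} :=
  h \mPo [tuple (map_poly (fun c : C => c%:MP) (z i)).['X_ord0] | i < n].

Lemma hcomp_eval n (h : {mpoly C[n]}) z t :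
  (hcomp h z).@[t] = h.@[fun j => (z j).[t ord0]].
Proof.
rewrite comp_mpoly_meval; apply: meval_eq => i.
by rewrite tnth_mktuple zpoly_eval.
Qed.

Lemma hsqnorm_comp n N (h : 'I_N -> {mpoly C[n]}) z t :
  hsqnorm (fun j => hcomp (h j) z) t = hsqnorm h (fun j => (z j).[t ord0]).
Proof. by apply: eq_bigr => j _; rewrite hcomp_eval. Qed.

Lemma part_Pk n (r : {mpoly C[n + n]}) (z : 'I_n -> {poly C}) k :
  in_Pk k r -> in_Pk k (hpullback r z).
Proof.
case=> H1 H2; split; first exact: pull_hsym.
move=> pts; have := H2 (fun i j => (z j).[pts i ord0]).
congr nonneg_definite; apply/matrixP => i j; by rewrite !mxE pull_eval.
Qed.

Lemma part_Pinf n (r : {mpoly C[n + n]}) (z : 'I_n -> {poly C}) :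
  in_Pinf r -> in_Pinf (hpullback r z).
Proof.
case=> H1 [N [h Hh]]; split; first exact: pull_hsym.
exists N, (fun j => hcomp (h j) z) => t.
by rewrite pull_eval hsqnorm_comp Hh.
Qed.

Definition cp (q : {poly C}) := map_poly (@Num.conj C) q.
Definition nsq M (c : 'I_M -> C) := \sum_(j < M) c j * (c j)^*.
Definition SP M (g : 'I_M -> {poly C}) := \sum_(j < M) g j * cp (g j).

Lemma nsq_eq0 M (c : 'I_M -> C) : nsq c = 0 -> forall j, c j = 0.
Proof.
move=> H j; have /(_ j isT) := psumr_eq0P (fun i _ => mul_conjC_ge0 (c i)) H.
by move/eqP; rewrite mul_conjC_eq0 => /eqP.
Qed.

Lemma Xdec m (q : {poly C}) : (forall k, (k < m)%N -> q`_k = 0) -> q = 'X^m * drop_poly m q.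
Proof.
move=> H; rewrite -{1}(poly_take_drop m q) mulrC.
suff -> : take_poly m q = 0 by rewrite add0r.
by apply/polyP => k; rewrite coef_take_poly coef0; case: ifP => // /H.
Qed.

Lemma conj_horner_nat q (e : nat) : (q.[e%:R])^* = (cp q).[e%:R].
Proof. by rewrite /cp -{2}(conjC_nat _ e) horner_map. Qed.

Lemma SP_dec M m (g : 'I_M -> {poly C}) :
  (forall j k, (k < m)%N -> (g j)`_k = 0) ->
  SP g = 'X^(m + m) * SP (fun j => drop_poly m (g j)).
Proof.
move=> H; rewrite /SP mulr_sumr; apply: eq_bigr => j _.
rewrite {1 2}(Xdec (H j)) /cp rmorphM /= map_polyXn exprD.
by rewrite -!mulrA; congr (_ * _); rewrite mulrCA.
Qed.

Lemma SP_drop0 M m (g : 'I_M -> {poly C}) :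
  (SP (fun j => drop_poly m (g j)))`_0 = nsq (fun j => (g j)`_m).
Proof.
rewrite /SP coef_sum; apply: eq_bigr => j _.
by rewrite coef0M /cp coef_map /= coef_drop_poly add0n.
Qed.

Lemma SP_horner M (g : 'I_M -> {poly C}) (e : nat) :
  (SP g).[e%:R] = nsq (fun j => (g j).[e%:R]).
Proof.
rewrite /SP horner_sum; apply: eq_bigr => j _.
by rewrite hornerM conj_horner_nat.
Qed.

Lemma f_order M m (P : {poly C}) (Q : {poly C}) (f : 'I_M -> {poly C}) :
  P * ('X^(m + m) * Q) = SP f -> forall j k, (k < m)%N -> (f j)`_k = 0.
Proof.
move=> E.
case: (boolP [exists k : 'I_m, [exists j, (f j)`_k != 0]]); last first.
  move=> /existsPn H j k km; have /existsPn/(_ j) := H (Ordinal km).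
  by move/negPn/eqP.
move=> /existsP[k0 /existsP[j0 nz]].
have exP : exists k, [exists j, (f j)`_k != 0] by exists k0; apply/existsP; exists j0.
case: (ex_minnP exP) => k /existsP[j1 nz1] kmin.
have kk0 : (k <= k0)%N by apply: kmin; apply/existsP; exists j0.
have low : forall j i, (i < k)%N -> (f j)`_i = 0.
  move=> j i ik; apply/eqP; apply/negPn/negP => nzi.
  have : (k <= i)%N by apply: kmin; apply/existsP; exists j.
  by rewrite leqNgt ik.
have := congr1 (fun q : {poly C} => q`_(k + k)) E; rewrite /= (SP_dec low) !coefXnM.
have km : (k < m)%N := leq_ltn_trans kk0 (ltn_ord k0).
have kk : (k + k < m + m)%N by lia.
rewrite ltnn subnn SP_drop0 mulrCA coefXnM kk => /esym H0.
by move: nz1; have -> := nsq_eq0 H0 j1; rewrite eqxx.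
Qed.

Lemma Xn_neq0 k : ('X^k : {poly C}) != 0.
Proof. exact: monic_neq0 (monicXn _ _). Qed.

Lemma SP_nz M m (g : 'I_M -> {poly C}) :
  nsq (fun j => (g j)`_m) != 0 -> SP (fun j => drop_poly m (g j)) != 0.
Proof. by apply: contraNneq => E; rewrite -SP_drop0 E coef0. Qed.

Lemma key_Q M N m (P : {poly C}) (g : 'I_M -> {poly C}) (f : 'I_N -> {poly C}) :
  (forall j k, (k < m)%N -> (g j)`_k = 0) ->
  nsq (fun j => (g j)`_m) != 0 ->
  (forall e : nat, nsq (fun j => (g j).[e%:R]) != 0 ->
     P.[e%:R] * nsq (fun j => (g j).[e%:R]) = nsq (fun j => (f j).[e%:R])) ->
  P`_0 * nsq (fun j => (g j)`_m) = nsq (fun j => (f j)`_m).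
Proof.
move=> Hg nz He.
have SGd := SP_dec Hg.
have SGnz : SP g != 0 by rewrite SGd mulf_neq0 ?Xn_neq0 ?SP_nz.
have Eq : P * SP g = SP f.
  have : (P * SP g - SP f) * SP g = 0.
    apply: poly_nat0 => e; rewrite hornerM hornerD hornerN !SP_horner.
    case: (eqVneq (nsq (fun j => (g j).[e%:R])) 0) => [->|nz']; first by rewrite mulr0.
    by rewrite mulrBl hornerM SP_horner He // subrr.
  by move/eqP; rewrite mulf_eq0 (negbTE SGnz) orbF subr_eq0 => /eqP.
have Hf := @f_order N m P _ f (etrans (congr1 _ (esym SGd)) Eq).
rewrite SGd (SP_dec Hf) mulrCA in Eq.
have {}Eq := mulfI (Xn_neq0 _) Eq.
by have := congr1 (fun q : {poly C} => q`_0) Eq; rewrite /= coef0M !SP_drop0.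
Qed.

Definition wtuple n (z : 'I_n -> {poly C}) (v : 'I_n -> C) : n.-tuple {mpoly C[2]} :=
  [tuple (map_poly (fun c : C => c%:MP) (z i)).['X_(ord0 : 'I_2)]
         + 'X_(ord_max : 'I_2) * (v i)%:MP | i < n].

Definition wcomp n (h : {mpoly C[n]}) z v : {mpoly C[2]} := h \mPo wtuple z v.

Lemma wcomp_eval n (h : {mpoly C[n]}) z v u :
  (wcomp h z v).@[u] = h.@[fun i => (z i).[u ord0] + u ord_max * v i].
Proof.
rewrite comp_mpoly_meval; apply: meval_eq => i.
by rewrite tnth_mktuple (mevalD u) (mevalM u) zpoly_eval (mevalXU u) mevalC.
Qed.

Definition gpoly n (h : {mpoly C[n]}) z v (t : 'I_1 -> C) : {poly C} :=
  map_poly (meval t) (muni (wcomp h z v)).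

Lemma gpoly_horner n (h : {mpoly C[n]}) z v t e :
  (gpoly h z v t).[e] = h.@[fun i => (z i).[t ord0] + e * v i].
Proof.
pose u (k : 'I_2) := if val k == 0%N then t ord0 else e.
have := muni_eval (wcomp h z v) u; rewrite wcomp_eval /gpoly.
have -> : u ord_max = e by [].
move=> E; rewrite E; congr (_.[_]); apply: eq_map_poly => q; apply: meval_eq => i.
by rewrite /u /= (ord1 i).
Qed.

Lemma gpoly_coef n (h : {mpoly C[n]}) z v t k :
  (gpoly h z v t)`_k = ((muni (wcomp h z v))`_k).@[t].
Proof. by rewrite /gpoly coef_map. Qed.

Definition rpoly n (r : {mpoly C[n + n]}) (z : 'I_n -> {poly C}) (v : 'I_n -> C)
    (t : 'I_1 -> C) : {poly C} :=
  (map_mpoly polyC r).@[fun i => match split i with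
     | inl j => ((z j).[t ord0])%:P + 'X * (v j)%:P
     | inr j => (((z j).[t ord0])^* )%:P + 'X * ((v j)^* )%:P end].

Lemma rpoly_horner n (r : {mpoly C[n + n]}) z v t (e : nat) :
  (rpoly r z v t).[e%:R] =
  hevalp r (fun i => (z i).[t ord0] + e%:R * v i) (fun i => (z i).[t ord0] + e%:R * v i).
Proof.
rewrite -horner_evalE /rpoly (rmorph_meval (horner_eval (e%:R : C))).
have -> : map_mpoly (horner_eval (e%:R : C)) (map_mpoly polyC r) = r.
  by apply/mpolyP => m; rewrite !mcoeff_map_mpoly /= horner_evalE hornerC.
rewrite hevalpE; apply: meval_eq => i; rewrite /hv /=.
case: (split i) => j; rewrite horner_evalE hornerD hornerC hornerM hornerX hornerC //.
by rewrite rmorphD rmorphM /= conjC_nat.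
Qed.

Lemma rpoly0 n (r : {mpoly C[n + n]}) z v t :
  (rpoly r z v t)`_0 = hevalp (hpullback r z) t t.
Proof.
rewrite -horner_coef0 (_ : (0 : C) = 0%:R) // rpoly_horner pull_eval.
by rewrite !hevalpE; apply: meval_eq => i; rewrite /hv; case: (split i) => j; rewrite mul0r addr0.
Qed.

Lemma exists_nz n (h : {mpoly C[n]}) : h != 0 -> exists p, h.@[p] != 0.
Proof.
move=> nz; apply: NNPP => H; move: nz; rewrite (ident_all (p := h)) ?eqxx //.
move=> p; apply/eqP; apply: contraT => np; case: H; by exists p.
Qed.

Lemma choose_m k0 M (Gm : 'I_M -> {poly {mpoly C[k0]}}) j0 : Gm j0 != 0 ->
  exists m, (forall j k, (k < m)%N -> (Gm j)`_k = 0) /\ exists j, (Gm j)`_m != 0.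
Proof.
move=> nz.
have exP : exists k, [exists j, (Gm j)`_k != 0].
  exists (size (Gm j0)).-1; apply/existsP; exists j0.
  by rewrite -lead_coefE lead_coef_eq0.
case: (ex_minnP exP) => m /existsP[j1 nz1] mmin; exists m; split; last by exists j1.
move=> j k km; apply/eqP; apply/negPn/negP => nzk.
have : (m <= k)%N by apply: mmin; apply/existsP; exists j.
by rewrite leqNgt km.
Qed.

Lemma part_Q n (r : {mpoly C[n + n]}) (z : 'I_n -> {poly C}) :
  hsym_poly r -> in_Q r -> in_Q (hpullback r z).
Proof.
move=> hr [_ [N [M [F [G [[j0 Gj0] HQ]]]]]].
split; first exact: pull_hsym.
have [p Hp] := exists_nz Gj0.
pose v i := p i - (z i).[0].
pose Gm j := muni (wcomp (G j) z v).
have nzG : Gm j0 != 0.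
  move: Hp; apply: contraNneq => E; apply/eqP.
  have := gpoly_horner (G j0) z v (fun _ => 0) 1; rewrite /gpoly -/(Gm j0) E map_poly0 horner0.
  move=> E1; rewrite E1; apply: meval_eq => i.
  by rewrite mul1r /v addrC subrK.
have [m [Hm1 [j1 Hm2]]] := choose_m nzG.
exists N, M, (fun j => (muni (wcomp (F j) z v))`_m), (fun j => (Gm j)`_m).
split; first by exists j1.
move=> t Ht.
have key := @key_Q M N m (rpoly r z v t) (fun j => gpoly (G j) z v t) (fun j => gpoly (F j) z v t).
have HG : hsqnorm (fun j => (Gm j)`_m) t = nsq (fun j => (gpoly (G j) z v t)`_m).
  by apply: eq_bigr => j _; rewrite gpoly_coef.
have HF : hsqnorm (fun j => (muni (wcomp (F j) z v))`_m) t = nsq (fun j => (gpoly (F j) z v t)`_m).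
  by apply: eq_bigr => j _; rewrite gpoly_coef.
rewrite HG HF -key ?rpoly0 ?mulfK -?HG //.
- by move=> j k km; rewrite gpoly_coef Hm1 // meval0.
- move=> e nze.
  pose x := fun i => (z i).[t ord0] + e%:R * v i.
  have EG : nsq (fun j => (gpoly (G j) z v t).[e%:R]) = hsqnorm G x.
    by apply: eq_bigr => j _; rewrite gpoly_horner.
  have EF : nsq (fun j => (gpoly (F j) z v t).[e%:R]) = hsqnorm F x.
    by apply: eq_bigr => j _; rewrite gpoly_horner.
  rewrite EG EF rpoly_horner HQ -?EG // divfK // -EG //.
Qed.

Lemma key_Q' M m (P S : {poly C}) (f : 'I_M -> {poly C}) :
  P * S = SP f -> (forall k, (k < m)%N -> S`_k = 0) ->
  if odd m then P`_0 * S`_m = 0 else P`_0 * S`_m = nsq (fun j => (f j)`_(m./2)).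
Proof.
move=> E HS; have HS' := Xdec HS.
have Em : m = (m./2 + m./2 + odd m)%N by rewrite addnn -[LHS]odd_double_half addnC.
set k := m./2 in Em *.
set St := drop_poly m S in HS'.
have E1 : P * ('X^(k + k) * ('X^(odd m) * St)) = SP f.
  by rewrite [X in P * X]mulrA -exprD -Em -HS'.
have Hf := f_order E1.
rewrite (SP_dec Hf) mulrCA in E1; have {}E1 := mulfI (Xn_neq0 _) E1.
have Sm : S`_m = St`_0 by rewrite /St coef_drop_poly add0n.
case: (odd m) E1 Em => E1 Em /=; last first.
  have := congr1 (fun q : {poly C} => q`_0) E1; rewrite /= coef0M SP_drop0 expr0 mul1r.
  by rewrite Sm.
have := congr1 (fun q : {poly C} => q`_0) E1; rewrite /= coef0M SP_drop0 expr1.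
rewrite coefXM eqxx mulr0 => /esym /nsq_eq0 Hk.
have Hf2 : forall j i, (i < k.+1)%N -> (f j)`_i = 0.
  move=> j i; rewrite ltnS leq_eqVlt => /orP[/eqP ->|ik]; first exact: Hk.
  exact: Hf.
have Em' : m = (k + k).+1 by rewrite [LHS]Em addn1.
have E3 : 'X^m * (P * St) = 'X^m * ('X * SP (fun j => drop_poly k.+1 (f j))).
  rewrite mulrCA -HS' E (SP_dec Hf2) mulrA -exprSr; congr (_ ^+ _ * _).
  by rewrite Em'; lia.
have {}E3 := mulfI (Xn_neq0 _) E3.
have := congr1 (fun q : {poly C} => q`_0) E3; rewrite /= coef0M coefXM eqxx.
by rewrite Sm.
Qed.

Definition i1 : 'I_3 := Ordinal (isT : (1 < 3)%N).

Definition stuple n (z : 'I_n -> {poly C}) (v : 'I_n -> C) : (n + n).-tuple {mpoly C[3]} :=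
  [tuple match split i with
   | inl j => (map_poly (fun c : C => c%:MP) (z j)).['X_(ord0 : 'I_3)]
              + 'X_(ord_max : 'I_3) * (v j)%:MP
   | inr j => (map_poly (fun c : C => (c^* )%:MP) (z j)).['X_i1]
              + 'X_(ord_max : 'I_3) * ((v j)^* )%:MP end | i < n + n].

Definition Sw n (s : {mpoly C[n + n]}) z v : {mpoly C[3]} := s \mPo stuple z v.

Definition sp n (s : {mpoly C[n + n]}) z v (a b : 'I_1 -> C) : {poly C} :=
  map_poly (meval (hv a b)) (muni (Sw s z v)).

Lemma sp_horner n (s : {mpoly C[n + n]}) z v a b e : e^* = e ->
  (sp s z v a b).[e] = hevalp s (fun i => (z i).[a ord0] + e * v i)
                                (fun i => (z i).[b ord0] + e * v i).
Proof.
move=> He.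
pose u (k : 'I_3) := if val k == 0%N then a ord0 else if val k == 1%N then (b ord0)^* else e.
have := muni_eval (Sw s z v) u.
have -> : u ord_max = e by [].
have -> : map_poly (meval (fun i => u (widen i))) (muni (Sw s z v)) = sp s z v a b.
  apply: eq_map_poly => q; apply: meval_eq => i; rewrite /hv.
  case: (@split_ordP 1 1 i) => j ->; rewrite (ord1 j) //.
move=> <-; rewrite comp_mpoly_meval hevalpE; apply: meval_eq => i.
rewrite tnth_mktuple /hv; case: (split i) => j.
  by rewrite (mevalD u) (mevalM u) zpoly_eval (mevalXU u) mevalC.
rewrite (mevalD u) (mevalM u) zpolyc_eval (mevalXU u) mevalC /u /= conjCK.
by rewrite rmorphD rmorphM /= He.
Qed.

Lemma sp_coef n (s : {mpoly C[n + n]}) z v a b k :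
  (sp s z v a b)`_k = ((muni (Sw s z v))`_k).@[hv a b].
Proof. by rewrite /sp coef_map. Qed.

Lemma P1_ge0 n (s : {mpoly C[n + n]}) x : in_Pk 1 s -> 0 <= hevalp s x x.
Proof.
case=> _ H; have := H (fun _ => x) (fun _ => 1).
by rewrite !big_ord1 !mxE conjC1 mul1r mulr1.
Qed.

Lemma P1_of n (s : {mpoly C[n + n]}) :
  hsym_poly s -> (forall x, 0 <= hevalp s x x) -> in_Pk 1 s.
Proof.
move=> H1 H2; split => // pts w; rewrite !big_ord1 !mxE [ord0]ord1.
rewrite mulrC mulrA; apply: mulr_ge0 => //.
exact: mul_conjC_ge0.
Qed.

Lemma right_cont (q : {poly R}) :
  (forall e : R, 0 < e -> e <= 1 -> 0 <= q.[e]) -> 0 <= q`_0.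
Proof.
move=> H.
set D := drop_poly 1 q.
have Hq e : q.[e] = q`_0 + e * D.[e].
  rewrite -{1}(poly_take_drop 1 q) hornerD hornerM hornerXn expr1 mulrC.
  have -> : take_poly 1 q = (q`_0)%:P.
    by apply/polyP => i; rewrite coef_take_poly coefC; case: i.
  by rewrite hornerC.
set B := \sum_(i < size D) `|D`_i|.
have B0 : 0 <= B by apply: sumr_ge0 => i _.
have HB e : 0 <= e -> e <= 1 -> D.[e] <= B.
  move=> e0 e1; apply: le_trans (ler_norm _) _.
  rewrite horner_coef; apply: le_trans (ler_norm_sum _ _ _) _.
  apply: ler_sum => i _; rewrite normrM normrX (ger0_norm e0).
  by rewrite ler_piMr ?normr_ge0 // exprn_ile1.
rewrite leNgt; apply/negP => neg.
set eps := Num.min 1 (- q`_0 / (2 * (B + 1))).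
have Bp : 0 < 2 * (B + 1) by rewrite mulr_gt0 // ltr_wpDl.
have e0 : 0 < eps by rewrite lt_min ltr01 divr_gt0 // oppr_gt0.
have e1 : eps <= 1 by rewrite ge_min lexx.
have e2 : eps * (2 * (B + 1)) <= - q`_0.
  rewrite -ler_pdivlMr //; by rewrite ge_min lexx orbT.
have h1 : eps * D.[eps] <= eps * B.
  by apply: ler_wpM2l; [exact: ltW | apply: HB => //; exact: ltW].
have := H eps e0 e1; rewrite Hq.
rewrite mulrCA mulrDr mulr1 in e2.
move: h1 e2 neg e0; set x := eps * D.[eps]; set y := eps * B.
move=> *; lra.
Qed.

Lemma ReD (x y : C) : complex.Re (x + y) = complex.Re x + complex.Re y.
Proof. by case: x; case: y. Qed.
Lemma ImD (x y : C) : complex.Im (x + y) = complex.Im x + complex.Im y.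
Proof. by case: x; case: y. Qed.

Lemma Re_horner (p : {poly C}) (x : R) :
  complex.Re (p.[real_complex R x]) = (map_poly (@complex.Re R) p).[x].
Proof.
rewrite (horner_coef_wide _ (leqnn (size p))).
rewrite (horner_coef_wide _ (size_poly _ _)).
rewrite (big_morph (@complex.Re R) ReD (erefl _)); apply: eq_bigr => i _.
rewrite coef_map_id0 // -rmorphXn.
by case: (p`_i) => a b /=; rewrite !mulr0 subr0.
Qed.

Lemma Im_horner (p : {poly C}) (x : R) :
  complex.Im (p.[real_complex R x]) = (map_poly (@complex.Im R) p).[x].
Proof.
rewrite (horner_coef_wide _ (leqnn (size p))).
rewrite (horner_coef_wide _ (size_poly _ _)).
rewrite (big_morph (@complex.Im R) ImD (erefl _)); apply: eq_bigr => i _.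
rewrite coef_map_id0 // -rmorphXn.
by case: (p`_i) => a b /=; rewrite !mulr0 add0r.
Qed.

Lemma nonneg_low (S : {poly C}) m : ~~ odd m ->
  (forall k, (k < m)%N -> S`_k = 0) ->
  (forall eps : R, 0 < eps -> eps <= 1 -> 0 <= S.[real_complex R eps]) ->
  0 <= S`_m.
Proof.
move=> _ Hl H.
have HS := Xdec Hl; set St := drop_poly m S in HS.
have -> : S`_m = St`_0 by rewrite /St coef_drop_poly add0n.
have Ht e : 0 < e -> e <= 1 -> 0 <= St.[real_complex R e].
  move=> e0 e1; have := H e e0 e1; rewrite HS hornerM hornerXn pmulr_rge0 //.
  by apply: exprn_gt0; rewrite ltcR.
have Hre : 0 <= complex.Re St`_0.
  rewrite -(coef_map_id0 _ _ (erefl (complex.Re (0 : C)))); apply: right_cont => e e0 e1.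
  by rewrite -Re_horner; have := Ht e e0 e1; rewrite lecE => /andP[].
have Him e : 0 < e -> e <= 1 -> (map_poly (@complex.Im R) St).[e] = 0.
  move=> e0 e1; rewrite -Im_horner; have := Ht e e0 e1; rewrite lecE => /andP[/eqP -> _].
  by [].
have Hi1 : 0 <= complex.Im St`_0.
  rewrite -(coef_map_id0 _ _ (erefl (complex.Im (0 : C)))); apply: right_cont => e e0 e1.
  by rewrite Him.
have Hi2 : 0 <= - complex.Im St`_0.
  rewrite -(coef_map_id0 _ _ (erefl (complex.Im (0 : C)))) -coefN.
  apply: right_cont => e e0 e1; by rewrite hornerN Him // oppr0.
rewrite lecE Hre andbT; apply/eqP => /=.
by apply/eqP; rewrite eq_le -oppr_ge0 Hi2 Hi1.
Qed.

Lemma part_Q' n (r : {mpoly C[n + n]}) (z : 'I_n -> {poly C}) :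
  hsym_poly r -> in_Q' r -> in_Q' (hpullback r z).
Proof.
move=> hr [Pr [s [N [F [Ps [snz HQ]]]]]].
split; first exact: part_Pk.
case: (classic (forall t, hevalp (hpullback r z) t t = 0)) => [H0|].
  exists 1, 0%N, (fun _ => 0); split; last split.
  - apply: P1_of => [|x]; last by rewrite hevalpE meval1 ler01.
    by apply: hsym_of_eval => x y; rewrite !hevalpE !meval1 conjC1.
  - exact: oner_neq0.
  - by move=> t; rewrite H0 mul0r /hsqnorm big_ord0.
move/not_all_ex_not => [t0 /eqP ht0].
have [p Hp] : exists p, hevalp s p p != 0.
  apply: NNPP => H; move/eqP: snz; apply; apply: herm_ident => x.
  apply/eqP; apply: contraT => nx; case: H; by exists x.
pose v i := p i - (z i).[0].
pose Sm := muni (Sw s z v).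
have nzS : Sm != 0.
  move: Hp; apply: contraNneq => E; apply/eqP.
  have := @sp_horner _ s z v (fun _ => 0) (fun _ => 0) 1 (conjC1 _).
  rewrite /sp -/Sm E map_poly0 horner0 => E1; rewrite E1 !hevalpE.
  by apply: meval_eq => i; rewrite /hv; case: (split i) => j; rewrite mul1r /v addrC subrK.
have [m [Hm1 [j1 Hm2]]] := @choose_m 2 1 (fun _ => Sm) ord0 nzS.
have {}Hm1 : forall k, (k < m)%N -> Sm`_k = 0 by move=> k; apply: (Hm1 ord0).
pose s' : {mpoly C[1 + 1]} := Sm`_m.
have s'nz : s' != 0 by [].
have Eqt t : rpoly r z v t * sp s z v t t = SP (fun j => gpoly (F j) z v t).
  apply/eqP; rewrite -subr_eq0; apply/eqP; apply: poly_nat0 => e.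
  rewrite hornerD hornerN hornerM SP_horner rpoly_horner sp_horner ?conjC_nat //.
  rewrite HQ; apply/eqP; rewrite subr_eq0; apply/eqP.
  by apply: eq_bigr => j _; rewrite gpoly_horner.
have Hlow t : forall k, (k < m)%N -> (sp s z v t t)`_k = 0.
  by move=> k km; rewrite sp_coef Hm1 // meval0.
have KEY t := key_Q' (Eqt t) (Hlow t).
have Sm_ev a b : (sp s z v a b)`_m = hevalp s' a b by rewrite sp_coef.
have ev : ~~ odd m.
  apply/negP => Hodd.
  have nzQ : hpullback r z * s' != 0.
    rewrite mulf_neq0 //; move: ht0; apply: contraNneq => E.
    by rewrite hevalpE E meval0.
  move/eqP: nzQ; apply; apply: herm_ident => t.
  have := KEY t; rewrite Hodd rpoly0 Sm_ev => E.
  by rewrite hevalpE (mevalM (hv t t)) -!hevalpE.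
exists s', N, (fun j => (muni (wcomp (F j) z v))`_(m./2)); split; last split => //.
- apply: P1_of => [|t].
    apply: hsym_of_eval => a b; rewrite -!Sm_ev.
    have -> : sp s z v b a = cp (sp s z v a b).
      apply/eqP; rewrite -subr_eq0; apply/eqP; apply: poly_nat0 => e.
      rewrite hornerD hornerN -conj_horner_nat !sp_horner ?conjC_nat //.
      by rewrite (hsym_eval _ _ Ps.1) subrr.
    by rewrite /cp [in RHS]coef_map /= conjCK.
  rewrite -Sm_ev; apply: nonneg_low; [exact: ev | exact: Hlow | move=> eps e0 e1].
  rewrite sp_horner; first exact: P1_ge0.
  exact: conjc_real.
- move=> t; have := KEY t; rewrite (negbTE ev) rpoly0 Sm_ev => ->.
  by apply: eq_bigr => j _; rewrite gpoly_coef.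
Qed.

End Aux.

Theorem lemma2p1 (R : realType) (n : nat) (r : {mpoly R[i][n + n]})
    (z : 'I_n -> {poly R[i]}) :
  hsym_poly r ->
  (in_Q r -> in_Q (hpullback r z)) /\
  (in_Q' r -> in_Q' (hpullback r z)) /\
  (forall k : nat, (0 < k)%N -> in_Pk k r -> in_Pk k (hpullback r z)) /\
  (in_Pinf r -> in_Pinf (hpullback r z)).
Proof.
move=> hr; split; first exact: part_Q.
split; first exact: part_Q'.
split; first by move=> k _; exact: part_Pk.
exact: part_Pinf.
Qed.
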